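(* Let $(\pi_1,\dots,\pi_R)$ be arbitrary probabilities (nonnegative, summing to 1), $N\in\mathbb N$, and $U$ uniform on $(0,1)$. Define $$N_j=\Big|\Big[N\sum_{i=1}^{j-1}\pi_i+U,\ N\sum_{i=1}^{j}\pi_i+U\Big)\cap\{1,2,\dots,N\}\Big|,\qquad j=1,\dots,R.$$ Then for any $j<k$, $\operatorname{Cov}(N_j,N_k)=F(r_l,r_m,r_u)$ for a function $F$ depending only on $r_l=N\pi_j\bmod 1$, $r_u=N\pi_k\bmod1$ and $r_m=N\sum_{i=j+1}^{k-1}\pi_i\bmod1$. Moreover, for all $r_l,r_u\in[0,1)$, $\int_0^1F(r_l,r,r_u)\,dr=0$.
   Context: $|A|$ denotes the number of elements of a finite set $A$. *)

(* Defs.v *)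
From HB Require Import structures.
From mathcomp Require Import all_boot all_order all_algebra.
From mathcomp Require Import all_classical all_reals all_analysis.
Set Implicit Arguments. Unset Strict Implicit. Unset Printing Implicit Defensive.
Import Order.TTheory GRing.Theory Num.Theory.
Local Open Scope classical_set_scope.
Local Open Scope ring_scope.

Definition frac1 {R : realType} (x : R) : R := x - (Num.floor x)%:~R.

Definition Ncount {R : realType} (N : nat) (pi : nat -> R) (j : nat) (u : R) : R :=
  (#|[set n : 'I_N.+1 | [&& (0 < val n)%N,
        N%:R * (\sum_(1 <= i < j) pi i) + u <= (val n)%:R &
        (val n)%:R < N%:R * (\sum_(1 <= i < j.+1) pi i) + u]]|)%:R.

(* expectation w.r.t. U uniform on (0,1) *)
Definition EU {R : realType} (f : R -> R) : R :=
  Rintegral lebesgue_measure [set x : R | 0 < x < 1] f.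

Definition CovN {R : realType} (N : nat) (pi : nat -> R) (j k : nat) : R :=
  EU (fun u => Ncount N pi j u * Ncount N pi k u)
  - EU (Ncount N pi j) * EU (Ncount N pi k).

(* Main.v *)
Require Import Defs.
From HB Require Import structures.
From mathcomp Require Import all_boot all_order all_algebra.
From mathcomp Require Import all_classical all_reals all_analysis.
From mathcomp Require Import lra ring measurable_realfun zify.
Import Order.TTheory GRing.Theory Num.Theory.
Import numFieldNormedType.Exports.
Local Open Scope classical_set_scope.
Local Open Scope ring_scope.

Lemma frac_bnd {R : realType} (x : R) : 0 <= frac1 x < 1.
Proof.
rewrite /frac1; have /andP[h1 h2] := floor_itv x.
rewrite intrD in h2; apply/andP; split; lra.
Qed.

Lemma fracE {R : realType} (z : int) (y : R) : 0 <= y < 1 -> frac1 (y + z%:~R) = y.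
Proof.
move=> /andP[h1 h2]; rewrite /frac1 (@floor_def _ _ z); first by rewrite addrK.
by rewrite intrD; apply/andP; split; lra.
Qed.

Lemma frac_dec {R : realType} (x : R) : x = frac1 x + (Num.floor x)%:~R.
Proof. by rewrite /frac1 subrK. Qed.

Lemma fracDz {R : realType} (x : R) (z : int) : frac1 (x + z%:~R) = frac1 x.
Proof.
by rewrite {1}(frac_dec x) -addrA -intrD fracE // frac_bnd.
Qed.

Definition Qf {R : realType} (y : R) : R := y * (1 - y) / 2.
Definition P0 {R : realType} (y : R) : R := y ^+ 2 / 4 - y ^+ 3 / 6.

Lemma ftc_piece {R : realType} (c a b : R) : a < b ->
  (\int[@lebesgue_measure R]_(x in `[a, b]) (Qf (x + c))%:E =
   (P0 (b + c))%:E - (P0 (a + c))%:E)%E.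
Proof.
move=> ab.
pose p : {poly R} := 'X + c%:P.
pose Qp : {poly R} := p * (1 - p) * (2^-1)%:P.
pose Pp : {poly R} := p ^+ 2 * (4^-1)%:P - p ^+ 3 * (6^-1)%:P.
have HQ : forall x, Qf (x + c) = Qp.[x].
  by move=> x; rewrite /Qp /p !hornerE /Qf.
have HP : forall x, P0 (x + c) = Pp.[x].
  by move=> x; rewrite /Pp /p !hornerE /P0.
have dp : p^`() = 1 by rewrite /p derivD derivX derivC addr0.
rewrite (_ : (fun x => (Qf (x + c))%:E) = (fun x => (Qp.[x])%:E)); last first.
  by apply/funext => x; rewrite HQ.
rewrite HP HP.
rewrite (@continuous_FTC2 _ (horner Qp) (horner Pp)) //.
- apply: continuous_in_subspaceT => x _; exact: continuous_horner.
- rewrite /derivable_oo_LRcontinuous; split.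
  + by move=> x _; exact: derivable_horner.
  + by apply: cvg_at_right_filter; exact: continuous_horner.
  + by apply: cvg_at_left_filter; exact: continuous_horner.
- move=> x _; rewrite -derivE /Pp /Qp derivB !derivM !derivC dp !hornerE /=. by field.

Qed.

Definition qf {R : realType} (t : R) : R := Qf (frac1 t).

Lemma qfDz {R : realType} (x : R) (z : int) : qf (x + z%:~R) = qf x.
Proof. by rewrite /qf fracDz. Qed.

Lemma qfN {R : realType} (t : R) : qf (- t) = qf t.
Proof.
have /andP[h1 h2] := frac_bnd t.
rewrite /qf {1}(frac_dec t) opprD.
have [->|nz] := eqVneq (frac1 t) 0.
  by rewrite oppr0 add0r -intrN -[X in frac1 X]add0r fracE //= lexx ltr01.
have -> : - frac1 t - (Num.floor t)%:~R = (1 - frac1 t) + (- Num.floor t - 1)%:~R.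
  rewrite intrB intrN; ring.
rewrite fracE; first by rewrite /Qf; ring.
have : 0 < frac1 t by rewrite lt_neqAle eq_sym nz h1.
move=> h; apply/andP; split; lra.
Qed.

Lemma meas_Qshift {R : realType} (c : R) (D : set R) :
  measurable_fun D (fun r => Qf (r + c)).
Proof.
apply: (measurable_funS measurableT) => //.
pose p : {poly R} := ('X + c%:P) * (1 - ('X + c%:P)) * (2^-1)%:P.
have -> : (fun r => Qf (r + c)) = horner p.
  by apply/funext => x; rewrite /p !hornerE /Qf.
apply: continuous_measurable_fun; exact: continuous_horner.
Qed.

Lemma frac_small {R : realType} (y : R) : 0 <= y < 1 -> frac1 y = y.
Proof. by move=> h; rewrite -[y in LHS]addr0 -(mulr0z 1) fracE. Qed.

Lemma Iq {R : realType} (s : R) :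
  (@lebesgue_measure R).-integrable `[0, 1] (EFin \o (fun r => qf (r + s))) /\
  (\int[@lebesgue_measure R]_(r in `[0%R, 1%R]) (qf (r + s))%:E = (12^-1)%:E)%E.
Proof.
set s' := frac1 s.
have /andP[hs0 hs1] : 0 <= s' < 1 by exact: frac_bnd.
have gE : forall r, qf (r + s) = qf (r + s').
  by move=> r; rewrite {1}(frac_dec s) addrA qfDz.
pose h (r : R) : R := if r <= 1 - s' then Qf (r + s') else Qf (r + (s' - 1)).
have gh : {in (`[0, 1]%classic : set R), (fun r => qf (r + s)) =1 h}.
  move=> r; rewrite inE /= in_itv /= => /andP[r0 r1]; rewrite gE /h /qf.
  case: ifPn => hr.
    have [e|ne] := eqVneq r (1 - s').
      rewrite e (_ : 1 - s' + s' = 0 + 1%:~R); last by rewrite add0r subrK.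
      by rewrite fracE ?lexx ?ltr01 // /Qf; ring.
    rewrite frac_small //; apply/andP; split; first lra.
    have : r < 1 - s' by rewrite lt_neqAle ne hr.
    lra.
  rewrite (_ : r + s' = (r + (s' - 1)) + 1%:~R); last by ring.
  by rewrite fracE //; rewrite -ltNge in hr; apply/andP; split; lra.
have mD : measurable (`[0, 1] : set R) by [].
have mh : measurable_fun (`[0, 1] : set R) h.
  apply: measurable_fun_if => //.
  - by apply: measurable_fun_ler => //; exact: measurable_cst.
  - exact: meas_Qshift.
  - exact: meas_Qshift.
have mg := eq_measurable_fun h (fun x xD => esym (gh x xD)) mh.
split.
  apply: measurable_bounded_integrable => //.
    by apply: compact_finite_measure; exact: segment_compact.
  exists 1; split => // M M1 r _ /=.
  have /andP[f0 f1] := frac_bnd (r + s).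
  rewrite /qf /Qf ger0_norm; last by apply: divr_ge0 => //; apply: mulr_ge0; lra.
  nra.
transitivity (\int[@lebesgue_measure R]_(x in `[0%R, 1%R]) (h x)%:E)%E.
  by apply: eq_integral => x xD; rewrite gh.
rewrite (@itv_bndbnd_setU _ _ _ (BRight (1 - s'))); last 2 first.
  by rewrite bnd_simp; lra.
  by rewrite bnd_simp; lra.
rewrite integral_setU //; last first.
  - apply/disj_setPS => x [] /=; rewrite !in_itv /= => /andP[_ a] /andP[b _].
    lra.
  - rewrite -itv_bndbnd_setU //; first exact/measurable_EFinP.
  all: try by rewrite leBSide /=; lra.
have E1 : (\int[@lebesgue_measure R]_(x in `[0%R, (1 - s')%R]) (h x)%:E =
    \int[@lebesgue_measure R]_(x in `[0%R, (1 - s')%R]) (Qf (x + s'))%:E)%E.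
  by apply: eq_integral => x; rewrite inE /= in_itv /= /h => /andP[_ ->].
have E2 : (\int[@lebesgue_measure R]_(x in `]((1 - s')%R), 1%R]) (h x)%:E =
    \int[@lebesgue_measure R]_(x in `]((1 - s')%R), 1%R]) (Qf (x + (s' - 1)))%:E)%E.
  apply: eq_integral => x; rewrite inE /= in_itv /= /h => /andP[a _].
  by rewrite leNgt a.
rewrite E1 E2 ftc_piece; last lra.
have [e|ne] := eqVneq s' 0.
  rewrite e subr0 set_itv_ge; last by rewrite bnd_simp ltxx.
  rewrite integral_set0 adde0 -EFinB; congr EFin; rewrite /P0; by field.
have E3 : (\int[@lebesgue_measure R]_(x in `]((1 - s')%R), 1%R]) (Qf (x + (s' - 1)))%:E =
    \int[@lebesgue_measure R]_(x in `[((1 - s')%R), 1%R]) (Qf (x + (s' - 1)))%:E)%E.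
  apply: integral_itv_obnd_cbnd; apply/measurable_EFinP; exact: meas_Qshift.
rewrite E3.
rewrite ftc_piece; last first.
  have : 0 < s' by rewrite lt_neqAle eq_sym ne hs0.
  lra.
rewrite -!EFinB -EFinD; congr EFin; rewrite /P0.
rewrite (_ : 1 - s' + (s' - 1) = 0); last by ring.
rewrite (_ : 1 + (s' - 1) = s'); last by ring.
rewrite (_ : 0 + s' = s'); last by ring.
by field.
Qed.

Definition Lfl {R : realType} (x u : R) : int :=
  Num.floor x + (if 1 - frac1 x < u then 1 else 0).

Lemma Lfl_le {R : realType} (x u : R) (z : int) : 0 < u < 1 ->
  (x + u <= z%:~R) = (Lfl x u < z).
Proof.
move=> /andP[u0 u1]; rewrite /Lfl.
move: (frac_bnd x) (frac_dec x); move: (frac1 x) (Num.floor x) => f fl /andP[f0 f1] ->.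
case: ifPn => c.
  have [h|h] := ltP (fl + 1) z.
    have h2 : fl + 2 <= z by lia.
    move: h2; rewrite -(ler_int R) intrD => h2.
    by apply/eqP; rewrite eqb_id; lra.
  move: h; rewrite -(ler_int R) intrD => h.
  by apply/eqP; rewrite eqbF_neg -ltNge; lra.
rewrite addr0; rewrite -leNgt in c.
have [h|h] := ltP fl z.
  have h2 : fl + 1 <= z by lia.
  move: h2; rewrite -(ler_int R) intrD => h2.
  by apply/eqP; rewrite eqb_id; lra.
move: h; rewrite -(ler_int R) => h.
by apply/eqP; rewrite eqbF_neg -ltNge; lra.
Qed.

Lemma Lfl_lt {R : realType} (x u : R) (z : int) : 0 < u < 1 ->
  (z%:~R < x + u) = (z <= Lfl x u).
Proof. by move=> hu; rewrite ltNge Lfl_le // -leNgt. Qed.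

Lemma card_itv (M a b : nat) : (b <= M)%N ->
  #|[set n : 'I_M.+1 | (a < n <= b)%N]| = (b - a)%N.
Proof.
move=> bM; rewrite -sum1_card big_mkcond /=.
rewrite (eq_bigr (fun i : 'I_M.+1 => ((a < i <= b)%N : nat))); last first.
  move=> i _; case: ifPn => [/set_mem /= -> //|H]; case E: (a < i <= b)%N => //; case/negP: H; apply: mem_set; exact: E.
rewrite -(big_mkord (fun _ => true) (fun i => ((a < i <= b)%N : nat))).
have [ab|ba] := leqP a b; last first.
  rewrite big1_seq /=; first lia.
  move=> i _; case: (ltnP a i) => //= ai.
  by rewrite leqNgt (ltn_trans ba ai).
rewrite (@big_cat_nat _ _ _ a.+1) //=; last by lia.
rewrite [X in (_ + X)%N](@big_cat_nat _ _ _ b.+1) //=; try lia.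
rewrite big1_seq /=; last first.
  by move=> i; rewrite mem_index_iota => /andP[_ ia]; rewrite ltnNge -ltnS ia.
rewrite [X in (_ + (_ + X))%N]big1_seq /=; last first.
  by move=> i; rewrite mem_index_iota => /andP[bi _]; rewrite (leqNgt i) bi andbF.
rewrite (eq_big_nat _ _ (F2 := fun => 1%N)); last first.
  by move=> i /andP[ai ib]; rewrite ai -ltnS ib.
rewrite sum_nat_const_nat; lia.
Qed.

Lemma natr_intr {R : realType} (n : nat) : (n%:Z)%:~R = n%:R :> R.
Proof. by rewrite -pmulrn. Qed.

Lemma Ncard {R : realType} (N : nat) (x y u : R) :
  0 <= x -> x <= y -> y <= N%:R -> 0 < u < 1 ->
  (#|[set n : 'I_N.+1 | [&& (0 < val n)%N, x + u <= (val n)%:R &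
        (val n)%:R < y + u]]|)%:R = ((Lfl y u - Lfl x u)%:~R : R).
Proof.
move=> x0 xy yN hu; have /andP[u0 u1] := hu.
have h1 : x + u <= (Lfl x u + 1)%:~R by rewrite Lfl_le //; lia.
have lx0 : 0 <= Lfl x u.
  have : (-1 : int) < Lfl x u by rewrite -(ltr_int R); move: h1; rewrite intrD; lra.
  lia.
have h2 : (Lfl y u)%:~R < y + u by rewrite Lfl_lt.
have lyN : Lfl y u <= N.
  have : Lfl y u < N%:Z + 1.
    by rewrite -(ltr_int R) intrD natr_intr; lra.
  lia.
have lxy : Lfl x u <= Lfl y u.
  rewrite -Lfl_lt //; have : (Lfl x u)%:~R < x + u by rewrite Lfl_lt.
  lra.
have [a Ea] : exists a : nat, Lfl x u = a by exists `|Lfl x u|%N; rewrite gez0_abs.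
have [b Eb] : exists b : nat, Lfl y u = b by exists `|Lfl y u|%N; rewrite gez0_abs //; lia.
rewrite Ea Eb in lxy lyN.
rewrite (_ : [set n : 'I_N.+1 | _] = [set n : 'I_N.+1 | (a < n <= b)%N]); last first.
  apply: eq_set => n; rewrite -!natr_intr Lfl_le // Lfl_lt // Ea Eb ltz_nat lez_nat.
  apply/propext; split => [/and3P[_ h3 h4]|/andP[h3 h4]].
    by apply/andP; split.
  by apply/and3P; split => //; apply: leq_ltn_trans (leq0n a) h3.
rewrite card_itv; last by lia.
by rewrite Ea Eb -natr_intr subzn //; lia.
Qed.

Notation mu := (@lebesgue_measure _).

Lemma intD' {R : realType} (D : set R) (f g : R -> R) : measurable D ->
  mu.-integrable D (EFin \o f) -> mu.-integrable D (EFin \o g) ->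
  mu.-integrable D (EFin \o (fun x => f x + g x)).
Proof.
move=> mD hf hg.
have H : mu.-integrable D ((EFin \o f) \+ (EFin \o g))%E by apply: integrableD.
by apply: eq_integrable H => // x _ /=; rewrite EFinD.
Qed.

Lemma intZ' {R : realType} (D : set R) (f : R -> R) (k : R) : measurable D ->
  mu.-integrable D (EFin \o f) ->
  mu.-integrable D (EFin \o (fun x => k * f x)).
Proof.
move=> mD hf.
have H : mu.-integrable D (fun x => k%:E * (EFin \o f) x)%E by apply: integrableZl.
by apply: eq_integrable H => // x _ /=; rewrite EFinM.
Qed.

Definition D0 {R : realType} : set R := [set x : R | 0 < x < 1].

Lemma D0E {R : realType} : (D0 : set R) = `]0, 1[%classic.
Proof. by apply: eq_set => x; rewrite in_itv. Qed.

Lemma mD0 {R : realType} : measurable (D0 : set R).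
Proof. by rewrite D0E. Qed.

Lemma muD0 {R : realType} : mu (D0 : set R) = 1%:E.
Proof. by rewrite D0E lebesgue_measure_itv /= lte_fin ltr01 oppr0 adde0. Qed.

Lemma intcst {R : realType} (c : R) : mu.-integrable (D0 : set R) (EFin \o (fun _ => c)).
Proof.
apply: measurable_bounded_integrable => //.
- exact: mD0.
- by rewrite (_ : _ D0 = 1%:E) ?ltry //; exact: muD0.
- by exists `|c|; split => // M M1 r _ /=; lra.
Qed.

Definition ind {R : realType} (t u : R) : R := if t < u then 1 else 0.

Lemma ind_int {R : realType} (t : R) : 0 <= t <= 1 ->
  mu.-integrable (D0 : set R) (EFin \o ind t) /\ Rintegral mu D0 (ind t) = 1 - t.
Proof.
move=> /andP[t0 t1].
pose A : set R := `]t, 2[%classic.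
have mA : measurable A by exact: measurable_itv.
have eqA : {in (D0 : set R), (fun x => (\1_A x)%:E) =1 EFin \o ind t}.
  move=> x; rewrite inE /D0 /= => /andP[x0 x1].
  rewrite /ind /A indicE; case: ifPn => tx.
    rewrite mem_setE in_itv /= tx /= (_ : x < 2) //; lra.
  by rewrite mem_setE in_itv /= (negbTE tx).
split.
  have H : mu.-integrable (D0 : set R) (fun x => (\1_A x)%:E).
    apply: (integrableS measurableT) => //; first exact: mD0.
    exact: integrable_indic_itv.
  apply: eq_integrable H => //; first exact: mD0.
rewrite /Rintegral.
have -> : (\int[mu]_(x in (D0 : set R)) (ind t x)%:E = \int[mu]_(x in (D0 : set R)) (\1_A x)%:E)%E.
  by apply: eq_integral => x xD; rewrite (eqA x xD).
rewrite integral_indic //; last exact: mD0.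
rewrite (_ : A `&` D0 = `]t, 1[%classic); last first.
  apply/seteqP; split => x /=; rewrite /A /D0 /= !in_itv /=.
    move=> [/andP[a b] /andP[c d]]; apply/andP; split => //.
  move=> /andP[a b]; split; apply/andP; split => //; lra.
have := @lebesgue_measure_itv R `]t, 1[.
rewrite /= => ->.
case: ifPn => h; first by rewrite -EFinB.
move: h; rewrite lte_fin -leNgt => h.
have -> : t = 1 by lra.
by rewrite subrr.
Qed.

Definition step {R : realType} (c : R) (s : seq (R * R)) (u : R) : R :=
  c + \sum_(p <- s) p.1 * ind p.2 u.

Lemma step_int {R : realType} (c : R) (s : seq (R * R)) :
  all (fun p => 0 <= p.2 <= 1) s ->
  mu.-integrable (D0 : set R) (EFin \o step c s) /\
  Rintegral mu D0 (step c s) = c + \sum_(p <- s) p.1 * (1 - p.2).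
Proof.
elim: s => [_|p s IH /= /andP[hp hs]].
  have -> : step c [::] = fun _ => c.
    by apply/funext => u; rewrite /step big_nil addr0.
  split; first exact: intcst.
  rewrite big_nil addr0 Rintegral_cst; last exact: mD0.
  by rewrite (_ : _ D0 = 1%:E) ?mulr1 //; exact: muD0.
have [i1 e1] := IH hs.
have [i2 e2] := ind_int p.2 hp.
have -> : step c (p :: s) = fun u => p.1 * ind p.2 u + step c s u.
  by apply/funext => u; rewrite /step big_cons; ring.
split; first by apply: intD' => //; [exact: mD0 | apply: intZ' => //; exact: mD0].
rewrite RintegralD //; [|exact: mD0|by apply: intZ' => //; exact: mD0].
rewrite RintegralZl //; last exact: mD0.
by rewrite e1 e2 big_cons; ring.
Qed.

Lemma ind_max {R : realType} (s t u : R) : ind (Num.max s t) u = ind s u * ind t u.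
Proof.
rewrite /ind gt_max; case: (s < u); case: (t < u); by rewrite ?mulr1 ?mulr0.
Qed.

Lemma Lfl_R {R : realType} (x y u : R) :
  ((Lfl y u - Lfl x u)%:~R : R) =
  (Num.floor y)%:~R - (Num.floor x)%:~R + ind (1 - frac1 y) u - ind (1 - frac1 x) u.
Proof.
rewrite /Lfl /ind !intrB !intrD.
by case: ifP => _; case: ifP => _; rewrite ?mulr1z ?mulr0z; ring.
Qed.

Lemma qf_link {R : realType} (x y : R) (z : int) : x = - y + z%:~R -> qf x = qf y.
Proof. by move=> ->; rewrite qfDz qfN. Qed.

Lemma Ckey {R : realType} (x y : R) : 0 <= x < 1 -> 0 <= y < 1 ->
  qf (x - y) = (x - x ^+ 2) / 2 + (y - y ^+ 2) / 2 - (1 - Num.max (1 - x) (1 - y) - x * y).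
Proof.
move=> /andP[x0 x1] /andP[y0 y1]; rewrite maxEle.
case: leP => h.
  rewrite /qf frac_small; last by apply/andP; split; lra.
  by rewrite /Qf; field.
rewrite /qf (_ : x - y = (x - y + 1) + (-1)%:~R); last by rewrite mulrN1z; ring.
rewrite fracE; last by apply/andP; split; lra.
by rewrite /Qf; field.
Qed.

Lemma L1 {R : realType} (a X Y Z : R) :
  qf (frac1 (a + X) - frac1 (a + X + Y + Z)) = qf (frac1 Y + frac1 Z).
Proof.
apply: (@qf_link _ _ _ (Num.floor (a + X + Y + Z) - Num.floor (a + X) - Num.floor Y - Num.floor Z)).
by rewrite /frac1 ?(intrD, intrB, intrN); ring.
Qed.

Lemma L2 {R : realType} (a X Y : R) :
  qf (frac1 (a + X) - frac1 (a + X + Y)) = qf (frac1 Y).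
Proof.
apply: (@qf_link _ _ _ (Num.floor (a + X + Y) - Num.floor (a + X) - Num.floor Y)).
by rewrite /frac1 ?(intrD, intrB, intrN); ring.
Qed.

Lemma L3 {R : realType} (a X Y Z : R) :
  qf (frac1 a - frac1 (a + X + Y + Z)) = qf (frac1 Y + (frac1 X + frac1 Z)).
Proof.
apply: (@qf_link _ _ _ (Num.floor (a + X + Y + Z) - Num.floor a - Num.floor Y - Num.floor X - Num.floor Z)).
by rewrite /frac1 ?(intrD, intrB, intrN); ring.
Qed.

Lemma L4 {R : realType} (a X Y : R) :
  qf (frac1 a - frac1 (a + X + Y)) = qf (frac1 Y + frac1 X).
Proof.
apply: (@qf_link _ _ _ (Num.floor (a + X + Y) - Num.floor a - Num.floor Y - Num.floor X)).
by rewrite /frac1 ?(intrD, intrB, intrN); ring.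
Qed.

Lemma psum_bnd {R : realType} (pi : nat -> R) (Rn m : nat) :
  (forall i, (1 <= i <= Rn)%N -> 0 <= pi i) ->
  \sum_(1 <= i < Rn.+1) pi i = 1 -> (m <= Rn.+1)%N ->
  0 <= \sum_(1 <= i < m) pi i <= 1.
Proof.
move=> hp hs hm.
have ge0 : forall p q, (1 <= p)%N -> (q <= Rn.+1)%N -> 0 <= \sum_(p <= i < q) pi i.
  move=> p q hp1 hq; rewrite big_nat_cond; apply: sumr_ge0 => i /andP[/andP[pi' iq] _].
  by apply: hp; lia.
apply/andP; split; first exact: ge0.
have [m0|m0] := leqP m 1.
  by rewrite big_geq //.
rewrite -hs (@big_cat_nat _ _ _ m 1 Rn.+1) //=; last by lia.
by rewrite lerDl ge0 //; lia.
Qed.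

Lemma intB' {R : realType} (D : set R) (f g : R -> R) : measurable D ->
  mu.-integrable D (EFin \o f) -> mu.-integrable D (EFin \o g) ->
  mu.-integrable D (EFin \o (fun x => f x - g x)).
Proof.
move=> mD hf hg.
have H : mu.-integrable D ((EFin \o f) \- (EFin \o g))%E by apply: integrableB.
by apply: eq_integrable H => // x _ /=; rewrite EFinB.
Qed.

Lemma tb_bnd {R : realType} (x : R) : 0 <= 1 - frac1 x <= 1.
Proof. have /andP[h1 h2] := frac_bnd x; apply/andP; split; lra. Qed.

Lemma tmax_bnd {R : realType} (x y : R) :
  0 <= Num.max (1 - frac1 x) (1 - frac1 y) <= 1.
Proof. by rewrite maxEle; case: ifP => _; exact: tb_bnd. Qed.

Lemma EU_D0 {R : realType} (f : R -> R) : EU f = Rintegral mu D0 f.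
Proof. by []. Qed.

Definition Fcov {R : realType} (l m u : R) : R :=
  qf m - qf (m + u) + qf (m + (l + u)) - qf (m + l).

Lemma part2 {R : realType} (rl ru : R) :
  (@lebesgue_measure R).-integrable [set r : R | 0 <= r <= 1]
    (fun r => (Fcov rl r ru)%:E) /\
  (\int[@lebesgue_measure R]_(r in [set r : R | (0 <= r <= 1)%R]) (Fcov rl r ru)%:E = 0)%E.
Proof.
have D01 : [set r : R | 0 <= r <= 1] = `[0, 1]%classic.
  by apply: eq_set => x; rewrite in_itv.
rewrite D01.
have mD : measurable (`[0, 1]%classic : set R) by [].
have ig : forall s, mu.-integrable (`[0, 1]%classic : set R) (EFin \o (fun r => qf (r + s))).
  by move=> s; exact: (Iq s).1.
have Rg : forall s, Rintegral mu (`[0, 1]%classic : set R) (fun r => qf (r + s)) = 12^-1.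
  by move=> s; rewrite /Rintegral (Iq s).2.
have Fe : (fun r => Fcov rl r ru) = (fun r => qf (r + 0) - qf (r + ru) + qf (r + (rl + ru)) - qf (r + rl)).
  by apply/funext => r; rewrite /Fcov addr0.
have iF : mu.-integrable (`[0, 1]%classic : set R) (EFin \o (fun r => Fcov rl r ru)).
  rewrite Fe; apply: intB' => //; apply: intD' => //; apply: intB' => //.
split; first exact: iF.
have hfin : (\int[mu]_(r in (`[0%R, 1%R]%classic : set R)) (Fcov rl r ru)%:E)%E \is a fin_num.
  by apply: integrable_fin_num => //; move: iF.
rewrite -(fineK hfin); congr EFin.
rewrite -[LHS]/(Rintegral mu `[0, 1]%classic (fun r => Fcov rl r ru)) Fe.
rewrite RintegralB //; last by apply: intD' => //; apply: intB'.
rewrite RintegralD //; last by apply: intB'.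
by rewrite RintegralB // !Rg; ring.
Qed.

Theorem lemma2 (R : realType) :
  exists F : R -> R -> R -> R,
    (forall (Rn N : nat) (pi : nat -> R) (j k : nat),
        (forall i, (1 <= i <= Rn)%N -> 0 <= pi i) ->
        \sum_(1 <= i < Rn.+1) pi i = 1 ->
        (0 < N)%N ->
        (1 <= j)%N -> (j < k)%N -> (k <= Rn)%N ->
        CovN N pi j k =
          F (frac1 (N%:R * pi j))
            (frac1 (N%:R * \sum_(j.+1 <= i < k) pi i))
            (frac1 (N%:R * pi k))) /\
    (forall rl ru : R, 0 <= rl < 1 -> 0 <= ru < 1 ->
        (@lebesgue_measure R).-integrable [set r : R | 0 <= r <= 1]
          (fun r => (F rl r ru)%:E) /\
        (\int[@lebesgue_measure R]_(r in [set r : R | (0 <= r <= 1)%R]) (F rl r ru)%:E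
          = 0)%E).
Proof.
exists Fcov; split; last by move=> rl ru _ _; exact: part2.
move=> Rn N pi j k hp hs N0 j1 jk kR.
have hSj1 : \sum_(1 <= i < j.+1) pi i = \sum_(1 <= i < j) pi i + pi j.
  by rewrite big_nat_recr.
have hSk : \sum_(1 <= i < k) pi i =
    \sum_(1 <= i < j.+1) pi i + \sum_(j.+1 <= i < k) pi i.
  by rewrite (@big_cat_nat _ _ _ j.+1) //; lia.
have hSk1 : \sum_(1 <= i < k.+1) pi i = \sum_(1 <= i < k) pi i + pi k.
  by rewrite big_nat_recr //; lia.
have bj : 0 <= \sum_(1 <= i < j) pi i <= 1 by apply: (psum_bnd _ _ _ hp hs); lia.
have bj1 : 0 <= \sum_(1 <= i < j.+1) pi i <= 1 by apply: (psum_bnd _ _ _ hp hs); lia.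
have bk : 0 <= \sum_(1 <= i < k) pi i <= 1 by apply: (psum_bnd _ _ _ hp hs); lia.
have bk1 : 0 <= \sum_(1 <= i < k.+1) pi i <= 1 by apply: (psum_bnd _ _ _ hp hs); lia.
have pj0 : 0 <= pi j by apply: hp; lia.
have pk0 : 0 <= pi k by apply: hp; lia.
have hN : 0 <= N%:R :> R by [].
rewrite hSj1 in bj1; rewrite hSk hSj1 in bk; rewrite hSk1 hSk hSj1 in bk1.
set Sj := \sum_(1 <= i < j) pi i in bj bj1 bk bk1 *.
set Sm := \sum_(j.+1 <= i < k) pi i in bk bk1 *.
have Ncb : forall x y : R, 0 <= x <= y -> y <= 1 -> 0 <= N%:R * x <= N%:R * y /\ N%:R * y <= N%:R.
  move=> x y /andP[x0 xy] y1; split; last by rewrite -[leRHS]mulr1 ler_wpM2l.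
  by apply/andP; split; [exact: mulr_ge0 | exact: ler_wpM2l].
set a := N%:R * Sj.
set X := N%:R * pi j.
set Y := N%:R * Sm.
set Z := N%:R * pi k.
have Sm0 : 0 <= Sm.
  rewrite /Sm big_nat_cond; apply: sumr_ge0 => i /andP[/andP[i1 i2] _]; apply: hp; lia.
have Sj0 : 0 <= Sj by case/andP: bj.
have S1 : Sj + pi j + Sm + pi k <= 1 by case/andP: bk1.
have a0 : 0 <= a by apply: mulr_ge0.
have X0 : 0 <= X by apply: mulr_ge0.
have Y0 : 0 <= Y by apply: mulr_ge0.
have Z0 : 0 <= Z by apply: mulr_ge0.
have tot : a + X + Y + Z <= N%:R.
  by rewrite /a /X /Y /Z -!mulrDr -[leRHS]mulr1 ler_wpM2l.
have aX : a <= a + X by lra.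
have XN : a + X <= N%:R by lra.
have YZ : a + X + Y <= a + X + Y + Z by lra.
have eNj : forall u, D0 u -> Ncount N pi j u =
    step ((Num.floor (a + X))%:~R - (Num.floor a)%:~R)
      [:: (1, 1 - frac1 (a + X)); (-1, 1 - frac1 a)] u.
  move=> u hu; rewrite /Ncount hSj1 -/Sj mulrDr -/a -/X.
  rewrite (Ncard _ _ _ _ a0 aX XN hu) Lfl_R /step !big_cons big_nil /=; ring.
have eNk : forall u, D0 u -> Ncount N pi k u =
    step ((Num.floor (a + X + Y + Z))%:~R - (Num.floor (a + X + Y))%:~R)
      [:: (1, 1 - frac1 (a + X + Y + Z)); (-1, 1 - frac1 (a + X + Y))] u.
  move=> u hu; rewrite /Ncount hSk1 hSk hSj1 -/Sj -/Sm !mulrDr -/a -/X -/Y -/Z.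
  have c0 : 0 <= a + X + Y by lra.
  rewrite (Ncard _ _ _ _ c0 YZ tot hu) Lfl_R /step !big_cons big_nil /=; ring.
rewrite /CovN !EU_D0.
set cj := ((Num.floor (a + X))%:~R - (Num.floor a)%:~R : R).
set ck := ((Num.floor (a + X + Y + Z))%:~R - (Num.floor (a + X + Y))%:~R : R).
set tA := 1 - frac1 a.
set tB := 1 - frac1 (a + X).
set tC := 1 - frac1 (a + X + Y).
set tD := 1 - frac1 (a + X + Y + Z).
have E1 : Rintegral mu D0 (Ncount N pi j) = Rintegral mu D0 (step cj [:: (1, tB); (-1, tA)]).
  by apply: eq_Rintegral => u; rewrite inE => /eNj.
have E2 : Rintegral mu D0 (Ncount N pi k) = Rintegral mu D0 (step ck [:: (1, tD); (-1, tC)]).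
  by apply: eq_Rintegral => u; rewrite inE => /eNk.
have E3 : Rintegral mu D0 (fun u => Ncount N pi j u * Ncount N pi k u) =
  Rintegral mu D0 (step (cj * ck) [:: (cj, tD); (-cj, tC); (ck, tB); (-ck, tA);
    (1, Num.max tB tD); (-1, Num.max tB tC); (-1, Num.max tA tD); (1, Num.max tA tC)]).
  apply: eq_Rintegral => u; rewrite inE => hu.
  rewrite eNj // eNk // /step !big_cons big_nil /= !ind_max /cj /ck /tA /tB /tC /tD; ring.
rewrite E1 E2 E3.
have h1 : all (fun p : R * R => 0 <= p.2 <= 1) [:: (1, tB); (-1, tA)].
  by rewrite /= /tA /tB !tb_bnd.
have h2 : all (fun p : R * R => 0 <= p.2 <= 1) [:: (1, tD); (-1, tC)].
  by rewrite /= /tC /tD !tb_bnd.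
have h3 : all (fun p : R * R => 0 <= p.2 <= 1) [:: (cj, tD); (-cj, tC); (ck, tB); (-ck, tA);
    (1, Num.max tB tD); (-1, Num.max tB tC); (-1, Num.max tA tD); (1, Num.max tA tC)].
  by rewrite /= /tA /tB /tC /tD !tb_bnd !tmax_bnd.
rewrite (step_int _ _ h1).2 (step_int _ _ h2).2 (step_int _ _ h3).2.
rewrite !big_cons !big_nil /= /Fcov.
rewrite -(L1 a X Y Z) -(L3 a X Y Z) -(L4 a X Y) -(L2 a X Y).
rewrite !Ckey ?frac_bnd //.
rewrite /tA /tB /tC /tD; ring.
Qed.
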